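(* Let $\mathcal{G}=(\vec V,\vec E)$ be a DAG with maximum (in plus out) degree $\Delta$, let $k\ge 2$, and let $V_i,V_j\in\vec V$ be non-adjacent. If $|\vec A_{ij}|\ge(2+\Delta^2)(\lceil\lg k\rceil+1)$, then an independence preserving augmentation $(\vec S_i^+,\vec S_j^+)$ of $(V_i,V_j)$ exists.
   Context: $\operatorname{\mathbf{DE}}(V)$ denotes the descendants of $V$ in $\mathcal{G}$; $\vec D_{ij}=\operatorname{\mathbf{DE}}(V_i)\cap\operatorname{\mathbf{DE}}(V_j)$ and $\vec A_{ij}=\vec V\setminus\vec D_{ij}$. For sets $\vec S_i,\vec S_j\subseteq\vec V\setminus\{V_i,V_j\}$, the ordered pair $(\vec S_i^+,\vec S_j^+)=(\vec S_i\cup\{V_i\},\vec S_j\cup\{V_j\})$ is an independence preserving augmentation (IPA) of $(V_i,V_j)$ if for some $\vec C\subset\vec V$, $\vec S_i^+$ and $\vec S_j^+$ are d-separated by $\vec C$ in $\mathcal{G}$. In the paper's construction the IPA has $|\vec S_i|=|\vec S_j|=\lceil\lg k\rceil$ with $\vec S_i,\vec S_j\subseteq\vec A_{ij}$. *)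

(* Defs.v *)
(* a DAG on a finite vertex type T, given by its edge relation E
   (E u v means u -> v). *)
From mathcomp Require Import all_boot.
Set Implicit Arguments. Unset Strict Implicit. Unset Printing Implicit Defensive.

Section DAG.
Variables (T : finType) (E : rel T).

Definition acyclic : Prop := forall x y, E x y -> ~~ connect E y x.

Definition adj (x y : T) : bool := E x y || E y x.

Definition degree (v : T) : nat := #|[set u | E u v]| + #|[set u | E v u]|.
Definition maxdeg : nat := \max_(v : T) degree v.

(* descendants DE(v) (v is its own descendant, reflexive closure) *)
Definition DE (v : T) : {set T} := [set w | connect E v w].
Definition Dij (vi vj : T) : {set T} := DE vi :&: DE vj.
Definition Aij (vi vj : T) : {set T} := ~: Dij vi vj.

Definition blocks_at (C : {set T}) (a w b : T) : bool :=
  if E a w && E b w then [disjoint DE w & C] else w \in C.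

Definition blocked (C : {set T}) (x : T) (s : seq T) : bool :=
  let p := x :: s in
  [exists i : 'I_(size p),
     [&& 0 < val i, val i < (size p).-1 &
         blocks_at C (nth x p (val i).-1) (nth x p (val i)) (nth x p (val i).+1)]].

Definition dsep (X Y C : {set T}) : Prop :=
  [/\ [disjoint X & Y], [disjoint X & C], [disjoint Y & C] &
      forall (x : T) (s : seq T), x \in X -> last x s \in Y ->
        path adj x s -> uniq (x :: s) -> blocked C x s].

Definition IPA (vi vj : T) (Si Sj : {set T}) : Prop :=
  [/\ Si \subset ~: [set vi; vj], Sj \subset ~: [set vi; vj] &
      exists C : {set T}, C \proper [set: T] /\ dsep (vi |: Si) (vj |: Sj) C].

End DAG.

(* Main.v *)
Require Import Defs.
From mathcomp Require Import all_boot zify.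
Set Implicit Arguments. Unset Strict Implicit. Unset Printing Implicit Defensive.

Section Core.
Variables (T : finType) (E : rel T).
Hypothesis acy : acyclic E.

Lemma E_asym u v : E u v -> E v u = false.
Proof. move=> Huv; apply/negbTE/negP => Hvu. by move: (acy Hvu); rewrite connect1. Qed.

Definition AnW (W : {set T}) u := [exists w in W, connect E u w].
Definition Cset (W : {set T}) := [set u | (u \notin W) && AnW W u].

Lemma AnW_E (W : {set T}) u v : E u v -> AnW W v -> AnW W u.
Proof.
move=> Huv /existsP [w /andP [Hw Hc]]; apply/existsP; exists w.
by rewrite Hw (connect_trans (connect1 Huv) Hc).
Qed.

Lemma AnW_in (W : {set T}) u : u \in W -> AnW W u.
Proof. by move=> Hu; apply/existsP; exists u; rewrite Hu connect0. Qed.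

Variables X Y : {set T}.
Hypothesis dXY : [disjoint X & Y].
Hypothesis H1 : forall x y, x \in X -> y \in Y -> ~~ adj E x y.
Hypothesis H2 : forall x y z, x \in X -> y \in Y -> E x z -> E y z ->
  AnW (X :|: Y) z -> False.

Let W := X :|: Y.
Let C := Cset W.

Variables (q : nat -> T) (n : nat).
Hypothesis Hadj : forall t, t < n -> adj E (q t) (q t.+1).

Definition blk a b := exists t, [&& a < t, t < b & blocks_at E C (q t.-1) (q t) (q t.+1)].

Lemma lemF a b : b <= n -> q b \in Y -> forall d t, b - t = d -> a < t -> t <= b ->
  E (q t.-1) (q t) -> ~~ AnW W (q t) -> blk a b.
Proof.
move=> Hbn Hb d; elim: d => [|d IH] t Hd Hat Htb He Hn.
  have Htb' : t = b by lia.
  subst t; move/negP: Hn; case; apply: AnW_in; by rewrite in_setU Hb orbT.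
have Htn : t < n by lia.
case Ht1: (E (q t.+1) (q t)).
  exists t; rewrite Hat /=; apply/andP; split; first lia.
  rewrite /blocks_at He Ht1 /=.
  rewrite disjoints_subset; apply/subsetP => c; rewrite /DE !inE => Hc.
  apply/negP => /andP [_ Hanc].
  move: Hanc => /existsP [w /andP [Hw Hcw]].
  move/negP: Hn; apply; apply/existsP; exists w; rewrite Hw.
  exact: connect_trans Hc Hcw.
have He2 : E (q t) (q t.+1) by move: (Hadj Htn); rewrite /adj Ht1 orbF.
apply: (IH t.+1) => //; try lia.
apply/negP => Han; move/negP: Hn; apply; exact: AnW_E He2 Han.
Qed.

Lemma core a b : a < b -> b <= n -> q a \in X -> q b \in Y ->
  (forall t, a < t -> t < b -> q t \notin W) -> blk a b.
Proof.
move=> Hab Hbn Ha Hb Hint.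
have [Hb1|Hb2] : b = a.+1 \/ a.+2 <= b by lia.
  by subst b; move: (H1 Ha Hb) (Hadj Hbn); move=> /negP.
have Hp1 : q a.+1 \notin W by apply: Hint; lia.
have Han : a < n by lia.
case E10 : (E (q a.+1) (q a)).
  exists a.+1; rewrite ltnSn /=; apply/andP; split; first lia.
  rewrite /blocks_at (E_asym E10) /= inE Hp1 /=.
  apply: AnW_E E10 _; apply: AnW_in; by rewrite in_setU Ha.
have E01 : E (q a) (q a.+1) by move: (Hadj Han); rewrite /adj E10 orbF.
case A1 : (AnW W (q a.+1)); last first.
  apply: (@lemF a b Hbn Hb (b - a.+1) a.+1) => //; try lia.
have Ha1n : a.+1 < n by lia.
case E12 : (E (q a.+1) (q a.+2)).
  exists a.+1; rewrite ltnSn /=; apply/andP; split; first lia.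
  by rewrite /blocks_at (E_asym E12) andbF inE Hp1 A1.
have E21 : E (q a.+2) (q a.+1) by move: (Hadj Ha1n); rewrite /adj E12.
have [Hb3|Hb4] : b = a.+2 \/ a.+2 < b by lia.
  by subst b; case: (H2 Ha Hb E01 E21 A1).
exists a.+2; apply/and3P; split; try lia.
rewrite /blocks_at /= E12 /= inE.
have Hp2 : q a.+2 \notin W by apply: Hint; lia.
rewrite Hp2 /=.
exact: AnW_E E21 A1.
Qed.

Lemma reduce d : forall a b, b - a <= d -> a < b -> b <= n -> q a \in X -> q b \in Y -> blk a b.
Proof.
elim: d => [|d IH] a b Hd Hab Hbn Ha Hb; first lia.
case: (boolP [exists t : 'I_b, (a < t) && (q t \in W)]).
  move=> /existsP [[t Htb] /= /andP [Hat HtW]].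
  move: HtW; rewrite in_setU => /orP [HtX|HtY].
    have [u /and3P [H1u H2u H3u]] := IH t b ltac:(lia) Htb Hbn HtX Hb.
    exists u; rewrite H3u; apply/andP; split; lia.
  have [u /and3P [H1u H2u H3u]] := IH a t ltac:(lia) Hat ltac:(lia) Ha HtY.
  exists u; rewrite H3u; apply/andP; split; lia.
move=> Hno; apply: core => // t Hat Htb; apply/negP => HtW.
move/negP: Hno; apply; apply/existsP; exists (Ordinal Htb); by rewrite Hat HtW.
Qed.

End Core.

Lemma dsep_main (T : finType) (E : rel T) (X Y : {set T}) :
  acyclic E -> [disjoint X & Y] ->
  (forall x y, x \in X -> y \in Y -> ~~ adj E x y) ->
  (forall x y z, x \in X -> y \in Y -> E x z -> E y z -> AnW E (X :|: Y) z -> False) ->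
  dsep E X Y (Cset E (X :|: Y)).
Proof.
move=> acy dXY H1 H2; split => //.
- rewrite disjoints_subset; apply/subsetP => x Hx.
  by rewrite inE /Cset inE in_setU Hx.
- rewrite disjoints_subset; apply/subsetP => x Hx.
  by rewrite inE /Cset inE in_setU Hx orbT.
move=> x s Hx Hl Hp Hu.
have Hadj : forall t, t < size s -> adj E (nth x (x::s) t) (nth x (x::s) t.+1).
  by move/(pathP x): Hp.
have Hn : nth x (x::s) (size s) = last x s by have := nth_last x (x::s).
have Hs : 0 < size s.
  case: s Hl {Hadj Hn Hp Hu} => //= Hl.
  by move: (disjointFr dXY Hx); rewrite Hl.
have [t /and3P [Ht1 Ht2 Ht3]] :=
  @reduce T E acy X Y dXY H1 H2 (fun t => nth x (x::s) t) (size s) Hadj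
    (size s) 0 (size s) (leq_subr _ _) Hs (leqnn _) Hx (etrans (congr1 (fun z => z \in Y) Hn) Hl).
have Hts : t < size (x :: s) by rewrite /=; lia.
apply/existsP; exists (Ordinal Hts); rewrite /= Ht1 Ht2 /=.
exact: Ht3.
Qed.

Section Cnt.
Variables (T : finType) (E : rel T).

Definition Nb v := [set u | adj E v u].
Definition B2 v := v |: (Nb v :|: \bigcup_(w in Nb v) (Nb w :\ v)).

Lemma adjC u v : adj E u v = adj E v u.
Proof. by rewrite /adj orbC. Qed.

Lemma B2_self v : v \in B2 v.
Proof. by rewrite /B2 setU11. Qed.

Lemma B2_adj x y : adj E x y -> y \in B2 x.
Proof. move=> H; rewrite /B2 !in_setU; apply/orP; right; apply/orP; left. by rewrite /Nb inE. Qed.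

Lemma B2_cc x y z : x != y -> E x z -> E y z -> y \in B2 x.
Proof.
move=> Hxy Hxz Hyz; rewrite /B2 !in_setU; apply/orP; right; apply/orP; right.
apply/bigcupP; exists z; first by rewrite /Nb inE /adj Hxz.
by rewrite in_setD1 eq_sym Hxy /Nb inE /adj Hyz orbT.
Qed.

Lemma B2_sym u v : u \in B2 v -> v \in B2 u.
Proof.
case/setU1P => [->|]; first exact: B2_self.
case/setUP => [Hn|Hb].
  by apply: B2_adj; move: Hn; rewrite /Nb inE adjC.
move/bigcupP: Hb => [w Hw]; rewrite in_setD1 => /andP [Huv Hwu].
rewrite /B2 in_setU1; apply/orP; right; rewrite in_setU; apply/orP; right.
apply/bigcupP; exists w; first by move: Hwu; rewrite /Nb !inE adjC.
by rewrite in_setD1 eq_sym Huv; move: Hw; rewrite /Nb !inE adjC.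
Qed.

Lemma card_bigcup (I : finType) (P : pred I) (F : I -> {set T}) :
  #|\bigcup_(i | P i) F i| <= \sum_(i | P i) #|F i|.
Proof.
apply: (big_rec2 (fun (S : {set T}) k => #|S| <= k)); first by rewrite cards0.
move=> i B b _ Hb; apply: leq_trans (leq_of_leqif (leq_card_setU _ B)) _.
by rewrite leq_add2l.
Qed.

Lemma card_Nb v : #|Nb v| <= maxdeg E.
Proof.
apply: leq_trans (@leq_bigmax _ (degree E) v).
rewrite /degree addnC.
have -> : Nb v = [set u | E v u] :|: [set u | E u v].
  by apply/setP => u; rewrite /Nb !inE.
exact: leq_of_leqif (leq_card_setU _ _).
Qed.

Lemma card_B2 v : #|B2 v| <= 1 + maxdeg E ^ 2.
Proof.
set D := maxdeg E.
rewrite /B2 cardsU1.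
have H1 : #|\bigcup_(w in Nb v) (Nb w :\ v)| <= #|Nb v| * (D - 1).
  apply: leq_trans (card_bigcup _ _) _.
  rewrite -sum_nat_const; apply: leq_sum => w Hw.
  have := cardsD1 v (Nb w); have := card_Nb w.
  have -> : v \in Nb w by move: Hw; rewrite /Nb !inE adjC.
  rewrite -/D; lia.
have H2 := leq_of_leqif (leq_card_setU (Nb v) (\bigcup_(w in Nb v) (Nb w :\ v))).
have H3 := card_Nb v.
have H4 : #|Nb v| + #|Nb v| * (D - 1) <= D ^ 2.
  rewrite -/D in H3; clear -H3; nia.
case: (v \notin _); rewrite /=; lia.
Qed.

Lemma ex_sub (A : {set T}) m : m <= #|A| -> exists B : {set T}, B \subset A /\ #|B| = m.
Proof.
elim: m => [|m IH] Hm; first by exists (set0 : {set T}); rewrite sub0set cards0.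
have [B [HBA HB]] := IH (ltnW Hm).
have : 0 < #|A :\: B| by rewrite cardsD (setIidPr HBA) HB; lia.
move=> /card_gt0P [x]; rewrite in_setD => /andP [HxB HxA].
exists (x |: B); split; last by rewrite cardsU1 HxB HB.
by rewrite subUset sub1set HxA HBA.
Qed.

Lemma card_diff (A B : {set T}) : #|A| - #|B| <= #|A :\: B|.
Proof.
rewrite cardsD; have := subset_leq_card (subsetIr A B); lia.
Qed.

End Cnt.
Unset Implicit Arguments.

Theorem lemma18 (T : finType) (E : rel T) (k : nat) (vi vj : T) :
  acyclic E -> 2 <= k -> vi != vj -> ~~ adj E vi vj ->
  (2 + maxdeg E ^ 2) * (up_log 2 k + 1) <= #|Aij E vi vj| ->
  exists Si Sj : {set T},
    [/\ IPA E vi vj Si Sj,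
        Si \subset Aij E vi vj, Sj \subset Aij E vi vj,
        #|Si| = up_log 2 k & #|Sj| = up_log 2 k].
Proof.
move=> acy _ Hij Hadj Hcard.
set m := up_log 2 k in Hcard *.
set D := maxdeg E in Hcard.
set A := Aij E vi vj in Hcard *.
have HB2 := card_B2 E.
rewrite -/D in HB2.
have [Si [HSi cSi]] := @ex_sub _ (A :\: (B2 E vj :|: [set vi])) m ltac:(
  apply: leq_trans (card_diff _ _);
  have := leq_of_leqif (leq_card_setU (B2 E vj) [set vi]);
  rewrite cards1; have := HB2 vj; nia).
have Hbig : #|\bigcup_(s in Si) B2 E s| <= m * (1 + D ^ 2).
  apply: leq_trans; first exact: card_bigcup.
  rewrite -cSi -sum_nat_const; apply: leq_sum => s _; exact: HB2.
have [Sj [HSj cSj]] := @ex_sub _ (A :\: (B2 E vi :|: \bigcup_(s in Si) B2 E s :|: [set vj])) m ltac:(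
  apply: leq_trans (card_diff _ _);
  have := leq_of_leqif (leq_card_setU (B2 E vi :|: \bigcup_(s in Si) B2 E s) [set vj]);
  have := leq_of_leqif (leq_card_setU (B2 E vi) (\bigcup_(s in Si) B2 E s));
  rewrite cards1; have := HB2 vi; nia).
have mSi : forall x, x \in Si -> [/\ x \in A, x \notin B2 E vj & x != vi].
  move=> x Hx; have H := subsetP HSi x Hx; rewrite in_setD (in_setU x (B2 E vj)) in_set1 !negb_or in H.
  by case/andP: H => /andP [-> ->] ->.
have mSj : forall y, y \in Sj -> [/\ y \in A, y \notin B2 E vi, y \notin \bigcup_(s in Si) B2 E s & y != vj].
  move=> y Hy; have H := subsetP HSj y Hy; rewrite in_setD (in_setU y (B2 E vi :|: _)) (in_setU y (B2 E vi)) in_set1 !negb_or in H.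
  by case/andP: H => /andP [/andP [-> ->] ->] ->.
have Si_vj : forall x, x \in Si -> x != vj.
  move=> x /mSi [_ H _]; apply/eqP => Hx; subst x; by rewrite B2_self in H.
have Sj_vi : forall y, y \in Sj -> y != vi.
  move=> y /mSj [_ H _ _]; apply/eqP => Hy; subst y; by rewrite B2_self in H.
have far : forall x y, x \in vi |: Si -> y \in vj |: Sj -> ~~ ((x == vi) && (y == vj)) ->
    y \notin B2 E x.
  move=> x y /setU1P [->|Hx] /setU1P [->|Hy]; rewrite ?eqxx //=.
  - by case/mSj: Hy.
  - move=> _; apply/negP => /B2_sym H; by case/mSi: Hx => _ /negP.
  - move=> _; case/mSj: Hy => _ _ H _; apply/negP => Hb; move/negP: H; apply.
    by apply/bigcupP; exists x.
have dXY : [disjoint vi |: Si & vj |: Sj].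
  rewrite disjoints_subset; apply/subsetP => x Hx; rewrite inE.
  apply/negP => Hy; have := far x x Hx Hy.
  rewrite B2_self /=; case/setU1P: Hx => [Hx|Hx].
    subst x; case/setU1P: Hy => [Hy|Hy]; first by move: Hij; rewrite Hy eqxx.
    by move: (Sj_vi _ Hy); rewrite eqxx.
  have [_ _ Hxi] := mSi x Hx; rewrite (negbTE Hxi) /=; by move/(_ isT).
exists Si, Sj; split => //; last first.
- exact: subset_trans HSj (subsetDl _ _).
- exact: subset_trans HSi (subsetDl _ _).
split.
- apply/subsetP => x Hx; rewrite !inE negb_or.
  by case/mSi: (Hx) => _ _ ->; rewrite Si_vj.
- apply/subsetP => y Hy; rewrite !inE negb_or.
  by case/mSj: (Hy) => _ _ _ ->; rewrite Sj_vi.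
exists (Cset E ((vi |: Si) :|: (vj |: Sj))); split.
  rewrite properT; apply/eqP => HC.
  have : vi \in Cset E ((vi |: Si) :|: (vj |: Sj)) by rewrite HC inE.
  by rewrite /Cset inE in_setU setU11.
apply: dsep_main => //.
- move=> x y Hx Hy; case: (boolP ((x == vi) && (y == vj))).
    by case/andP => /eqP -> /eqP ->.
  move=> Hn; apply/negP => Ha; move: (far x y Hx Hy Hn).
  by rewrite B2_adj.
- move=> x y z Hx Hy Hxz Hyz Han.
  case: (boolP ((x == vi) && (y == vj))); last first.
    move=> Hn; have Hxy : x != y.
      by apply/negP => /eqP Hxy; subst y; move: (disjointFr dXY Hx); rewrite Hy.
    by move: (far x y Hx Hy Hn); rewrite (B2_cc Hxy Hxz Hyz).
  case/andP => /eqP Hx' /eqP Hy'; subst x y.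
  move/existsP: Han => [w /andP [Hw Hzw]].
  have Hiw : connect E vi w := connect_trans (connect1 Hxz) Hzw.
  have Hjw : connect E vj w := connect_trans (connect1 Hyz) Hzw.
  have HwD : w \notin A by rewrite /A /Aij inE negbK /Dij inE /DE !inE Hiw Hjw.
  move: Hw; rewrite in_setU => /orP [] /setU1P [Hw|Hw].
  + by subst w; move: (acy _ _ Hxz); rewrite Hzw.
  + by case/mSi: Hw => HA _ _; move: HwD; rewrite HA.
  + by subst w; move: (acy _ _ Hyz); rewrite Hzw.
  + by case/mSj: Hw => HA _ _ _; move: HwD; rewrite HA.
Qed.
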